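(* Let $W=C_3\wr\mathbb{Z}$ and $B(W)=\bigoplus_{\mathbb{Z}}C_3\trianglelefteq W$. If $H\le W$ is almost-normal (i.e. its normaliser $N_W(H)$ has finite index in $W$) and $H\not\subseteq B(W)$, then $|W:H|<\infty$.
   Context: $W=\bigoplus_{\mathbb{Z}}C_3\rtimes\mathbb{Z}$, with $\mathbb{Z}$ acting on $B(W)=\bigoplus_{\mathbb{Z}}C_3$ by shifting coordinates. *)

(* Defs.v *)
(* The lamplighter-type group W = C_3 wr Z = (+)_Z C_3 x| Z,
   built concretely: elements are pairs (f, n) with f : int -> 'Z_3 finitely
   supported (the base group B(W)) and n : int; Z acts on B(W) by shifting. *)
From HB Require Import structures.
From mathcomp Require Import all_boot all_order all_algebra zify.
Set Implicit Arguments. Unset Strict Implicit. Unset Printing Implicit Defensive.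
Import GRing.Theory Num.Theory.
Local Open Scope ring_scope.

Definition finsupp (f : int -> 'Z_3) : Prop :=
  exists N : nat, forall k : int, (N < absz k)%N -> f k = 0.

Record lamps := Lamps { lval :> int -> 'Z_3; lvalP : finsupp lval }.

Lemma finsupp0 : finsupp (fun _ => 0).
Proof. by exists 0%N. Qed.

Lemma finsuppD (f g : lamps) : finsupp (fun k => f k + g k).
Proof.
case: f => f [N Hf]; case: g => g [M Hg]; exists (maxn N M) => k Hk /=.
rewrite Hf ?Hg ?addr0 //; lia.
Qed.

Lemma finsuppN (f : lamps) : finsupp (fun k => - f k).
Proof. case: f => f [N Hf]; exists N => k Hk /=; by rewrite Hf ?oppr0. Qed.

Lemma finsuppS (m : int) (f : lamps) : finsupp (fun k => f (k - m)).
Proof.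
case: f => f [N Hf]; exists (N + absz m)%N => k Hk /=.
apply: Hf; lia.
Qed.

Definition lzero : lamps := Lamps finsupp0.
Definition ladd (f g : lamps) : lamps := Lamps (finsuppD f g).
Definition lopp (f : lamps) : lamps := Lamps (finsuppN f).
(* shift by m : (lshift m f) k = f (k - m) *)
Definition lshift (m : int) (f : lamps) : lamps := Lamps (finsuppS m f).

Definition W := (lamps * int)%type.

Definition wmul (x y : W) : W := (ladd x.1 (lshift x.2 y.1), x.2 + y.2).
Definition wone : W := (lzero, 0).
Definition winv (x : W) : W := (lshift (- x.2) (lopp x.1), - x.2).

Definition baseW (x : W) : Prop := x.2 = 0.

Definition is_subgroup (H : W -> Prop) : Prop :=
  [/\ H wone, (forall x y, H x -> H y -> H (wmul x y)) & (forall x, H x -> H (winv x))].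

Definition normaliser (H : W -> Prop) : W -> Prop :=
  fun g => forall h, H h <-> H (wmul (wmul g h) (winv g)).

Definition finite_index (K : W -> Prop) : Prop :=
  exists s : list W, forall w : W, exists g, List.In g s /\ K (wmul (winv g) w).

Definition almost_normal (H : W -> Prop) : Prop := finite_index (normaliser H).

(* Main.v *)
Require Import Defs.
From mathcomp Require Import all_boot all_order all_algebra zify ring.
From Stdlib Require Import FunctionalExtensionality ProofIrrelevance Classical.
Set Implicit Arguments. Unset Strict Implicit. Unset Printing Implicit Defensive.
Import GRing.Theory Num.Theory.
Local Open Scope ring_scope.

Lemma lamps_ext (f g : lamps) : (forall k, f k = g k) -> f = g.
Proof.
case: f => f fP; case: g => g gP /= E.
have ? := functional_extensionality _ _ E; subst g.
by rewrite (proof_irrelevance _ fP gP).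
Qed.

Lemma lapp (f : lamps) a b : a = b -> f a = f b.
Proof. by move=> ->. Qed.

Lemma wext (x y : W) : (forall k, x.1 k = y.1 k) -> x.2 = y.2 -> x = y.
Proof. by case: x => a m; case: y => b n /= E ->; rewrite (lamps_ext E). Qed.

Lemma wmulA x y z : wmul x (wmul y z) = wmul (wmul x y) z.
Proof.
apply: wext => [k|] /=; last by rewrite addrA.
rewrite addrA; congr (_ + _); apply: lapp; ring.
Qed.

Lemma wmul1 x : wmul x wone = x.
Proof. apply: wext => [k|] /=; last by rewrite addr0. by rewrite addr0. Qed.

Lemma wmulV x : wmul x (winv x) = wone.
Proof.
apply: wext => [k|] /=; last by rewrite subrr.
rewrite (lapp x.1 (_ : k - x.2 - - x.2 = k)); last ring.
by rewrite subrr.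
Qed.

Lemma winvK x : winv (winv x) = x.
Proof.
apply: wext => [k|] /=; last by rewrite opprK.
rewrite opprK (lapp x.1 (_ : k - - - x.2 - - x.2 = k)) //; ring.
Qed.

Lemma wmulVx x : wmul (winv x) x = wone.
Proof. by rewrite -{2}(winvK x) wmulV. Qed.

Lemma winvM x y : winv (wmul x y) = wmul (winv y) (winv x).
Proof.
apply: wext => [k|] /=; last by ring.
rewrite opprD addrC; congr (_ + _); congr (- _); apply: lapp; ring.
Qed.

Lemma w1mul x : wmul wone x = x.
Proof. apply: wext => [k|] /=; last by rewrite add0r. by rewrite add0r subr0. Qed.

Lemma conjM a b h : wmul (wmul (wmul a b) h) (winv (wmul a b)) =
  wmul (wmul a (wmul (wmul b h) (winv b))) (winv a).
Proof. by rewrite winvM !wmulA. Qed.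

Lemma normM H a b : normaliser H a -> normaliser H b -> normaliser H (wmul a b).
Proof. move=> Na Nb h; rewrite conjM -Na; exact: Nb. Qed.

Lemma normV H a : normaliser H a -> normaliser H (winv a).
Proof.
move=> Na h; rewrite winvK; rewrite (Na (wmul (wmul (winv a) h) a)).
have -> : wmul (wmul a (wmul (wmul (winv a) h) a)) (winv a) = h.
  by rewrite !wmulA wmulV w1mul -wmulA wmulV wmul1.
by [].
Qed.

Definition elt (c : lamps) : W := (c, 0).

Lemma eltdiff (c c0 : lamps) : wmul (winv (elt c0)) (elt c) = elt (ladd c (lopp c0)).
Proof.
apply: wext => [k|] /=; last by rewrite oppr0 addr0.
by rewrite oppr0 !subr0 addrC.
Qed.

Lemma diffcoset g c0 c : wmul (winv (wmul (winv g) (elt c0))) (wmul (winv g) (elt c)) = wmul (winv (elt c0)) (elt c).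
Proof. by rewrite winvM winvK wmulA -(wmulA (winv (elt c0)) g) wmulV wmul1. Qed.

Lemma K_fin H (s : list W) : exists LK : list lamps, forall c,
  (exists g, List.In g s /\ normaliser H (wmul (winv g) (elt c))) ->
  exists b, List.In b LK /\ normaliser H (elt (ladd c (lopp b))).
Proof.
elim: s => [|g s [LK IH]].
  by exists nil => c [g []].
case: (classic (exists c0, normaliser H (wmul (winv g) (elt c0)))) => [[c0 Hc0]|nc].
  exists (c0 :: LK) => c [g' [[<-|Ig'] Ng']].
    exists c0; split; first by left.
    rewrite -eltdiff.
    rewrite -(diffcoset g).
    by apply: normM => //; apply: normV.
  have [b [Ib Nb]] := IH c (ex_intro _ g' (conj Ig' Ng')).
  by exists b; split => //; right.
exists LK => c [g' [[<-|Ig'] Ng']].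
  by case: nc; exists c.
exact: IH c (ex_intro _ g' (conj Ig' Ng')).
Qed.

Definition lphi (n : int) (b : lamps) : lamps := ladd b (lopp (Defs.lshift n b)).

Lemma comm_in H (h : W) b : is_subgroup H -> H h -> normaliser H (elt b) ->
  H (elt (lphi h.2 b)).
Proof.
case=> H1 HM HV Hh Nb.
have -> : elt (lphi h.2 b) = wmul (wmul (wmul (elt b) h) (winv (elt b))) (winv h).
  apply: wext => [k|] /=; last by ring.
  rewrite (lapp h.1 (_ : k - (0 + h.2 - 0) - - h.2 = k - 0)); last ring.
  rewrite (lapp b (_ : k - (0 + h.2) - - 0 = k - h.2)); last ring.
  ring.
apply: HM; last exact: HV.
exact: (Nb h).1 Hh.
Qed.

Section Dec.
Variables (n : int) (c : lamps) (N : nat).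
Hypothesis n_gt0 : 0 < n.
Hypothesis cN : forall k : int, (N < absz k)%N -> c k = 0.

Definition afun (k : int) : 'Z_3 :=
  if 0 <= k then - \sum_(t < N.+1) c (k + t.+1%:Z * n)
  else \sum_(t < N.+1) c (k - t%:Z * n).

Lemma afun_supp : finsupp afun.
Proof.
exists N => k Hk; rewrite /afun; case: ifP => k0.
  rewrite big1 ?oppr0 // => t _; apply: cN.
  have : 0 <= t%:Z by [].
  nia.
rewrite big1 // => t _; apply: cN.
have : 0 <= t%:Z by [].
nia.
Qed.

Definition adec : lamps := Lamps afun_supp.

Lemma adec_ok k : (k < 0) || (n <= k) -> adec k - adec (k - n) = c k.
Proof.
case/orP => Hk; rewrite /= /afun.
  rewrite ifF; last by lia.
  rewrite ifF; last by lia.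
  rewrite big_ord_recl big_ord_recr /= mul0r subr0.
  rewrite [X in c k + X](eq_bigr (fun i : 'I_N => c (k - n - i%:Z * n))); last first.
    move=> i _; apply: lapp; rewrite /bump /= add1n intS; ring.
  rewrite (@cN (k - n - N%:Z * n)); last first.
    have : 0 <= N%:Z by [].
    nia.
  ring.
rewrite ifT; last by lia.
rewrite ifT; last by lia.
rewrite big_ord_recr big_ord_recl /= mul1r.
rewrite [X in _ - - (_ + X)](eq_bigr (fun i : 'I_N => c (k + (widen_ord (leqnSn N) i).+1%:Z * n))); last first.
  move=> i _; apply: lapp; rewrite /bump /= add1n !intS; ring.
rewrite (@cN (k + N.+1%:Z * n)); last first.
  have : 0 <= N%:Z by [].
  nia.
rewrite (lapp c (_ : k - n + n = k)); last ring.
ring.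
Qed.
End Dec.

Lemma decomp (n : int) (c : lamps) : 0 < n -> exists a rho : lamps,
  (forall k, (k < 0) || (n <= k) -> rho k = 0) /\ forall k, c k = lphi n a k + rho k.
Proof.
move=> n0; case: (lvalP c) => N cN.
exists (@adec n c N n0 cN); exists (ladd c (lopp (lphi n (@adec n c N n0 cN)))); split => k /=.
  move=> Hk; rewrite (@adec_ok n c N n0 cN k Hk); ring.
ring.
Qed.

Lemma inP (T : eqType) (x : T) (s : seq T) : x \in s -> List.In x s.
Proof.
elim: s => // y s IH; rewrite in_cons => /orP [/eqP ->|/IH]; by [left | right].
Qed.

Definition rfun (nn : nat) (F : {ffun 'I_nn -> 'Z_3}) (k : int) : 'Z_3 :=
  if k is Posz m then
    (if (insub m : option 'I_nn) is Some i then F i else 0)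
  else 0.

Lemma rfun_supp nn F : finsupp (@rfun nn F).
Proof.
exists nn => k; case: k => // m /= Hm.
by rewrite insubN // -leqNgt ltnW.
Qed.

Definition mkrho nn F : lamps := Lamps (@rfun_supp nn F).

Lemma R_list (nn : nat) : exists R : list lamps, forall rho : lamps,
  (forall k, (k < 0) || (nn%:Z <= k) -> rho k = 0) -> List.In rho R.
Proof.
exists (List.map (@mkrho nn) (enum {ffun 'I_nn -> 'Z_3})) => rho Hr.
have -> : rho = mkrho [ffun i : 'I_nn => rho (nat_of_ord i)%:Z].
  apply: lamps_ext => k /=; rewrite /rfun; case: k => [m|m].
    case: insubP => [i _ <-|Hm]; first by rewrite ffunE.
    by apply: Hr; apply/orP; right; rewrite lez_nat leqNgt.
  by apply: Hr.
by apply: List.in_map; apply: inP; rewrite mem_enum.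
Qed.

Theorem proposition4p6 (H : W -> Prop) :
  is_subgroup H -> almost_normal H -> ~ (forall h, H h -> baseW h) ->
  finite_index H.
Proof.
move=> Hsub [s Hs] nb.
have Hsub' := Hsub; case: Hsub' => H1 HM HV.
have [h [Hh hpos]] : exists h, H h /\ 0 < h.2.
  have [h Hh] : exists h, ~ (H h -> baseW h).
    by apply: not_all_ex_not.
  have [Hh' nbh] := imply_to_and _ _ Hh.
  rewrite /baseW in nbh.
  case: (ltrgtP h.2 0) => [hn|hp|h0]; last by [].
    by exists (winv h); split; [apply: HV | rewrite /= oppr_gt0].
  by exists h.
have [LK HLK] := K_fin H s.
have HK : forall c, exists b, List.In b LK /\ normaliser H (elt (ladd c (lopp b))).
  move=> c; apply: HLK; exact: Hs.
have [nn Eh] : exists nn : nat, h.2 = nn%:Z by exists (absz h.2); lia.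
have [R HR] := R_list nn.
pose LH := List.flat_map (fun rho => List.map (fun b => ladd rho (lphi h.2 b)) LK) R.
have HB : forall c, exists g, List.In g LH /\ H (elt (ladd c (lopp g))).
  move=> c.
  have [a [rho [Hrho Hc]]] := decomp c hpos.
  have [b [Ib Nb]] := HK a.
  exists (ladd rho (lphi h.2 b)); split.
    apply/List.in_flat_map; exists rho; split.
      by apply: HR => k Hk; apply: Hrho; rewrite Eh.
    by apply: List.in_map.
  have := comm_in Hsub Hh Nb.
  congr H; apply: wext => [k|] //=.
  rewrite Hc /=; ring.
pose S := List.flat_map (fun mm : nat =>
  List.map (fun g => (Defs.lshift mm%:Z g, mm%:Z) : W) LH) (iota 0 nn).
pose P w := exists g, List.In g S /\ H (wmul (winv g) w).
have red : forall w x, H x -> P (wmul w x) -> P w.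
  move=> w x Hx [g [Ig Hg]]; exists g; split => //.
  have -> : wmul (winv g) w = wmul (wmul (winv g) (wmul w x)) (winv x).
    by rewrite !wmulA -(wmulA _ x) wmulV wmul1.
  by apply: HM => //; apply: HV.
have base : forall mm : nat, (mm < nn)%N -> forall c, P (c, mm%:Z).
  move=> mm Hmm c.
  have [g [Ig Hg]] := HB (Defs.lshift (- mm%:Z) c).
  exists (Defs.lshift mm%:Z g, mm%:Z); split.
    apply/List.in_flat_map; exists mm; split.
      by apply: inP; rewrite mem_iota.
    by apply: (List.in_map (fun g => (Defs.lshift mm%:Z g, mm%:Z) : W)).
  move: Hg; congr H; apply: wext => [k|] /=; last by ring.
  rewrite (lapp g (_ : k - - mm%:Z - mm%:Z = k)); last ring.
  ring.
have main : forall j : nat, forall m : int, (absz m <= j)%N -> forall c, P (c, m).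
  elim=> [|j IH] m Hm c.
    have -> : m = 0%:Z by lia.
    apply: base; lia.
  case: (boolP ((0 <= m) && (m < nn%:Z))) => [/andP [m0 mn]|nr].
    have [mm Em] : exists mm : nat, m = mm%:Z by exists (absz m); lia.
    rewrite Em; apply: base; lia.
  case: (boolP (nn%:Z <= m)) => [mn|mn].
    apply: (red _ (winv h) (HV _ Hh)).
    apply: IH; rewrite /= Eh; lia.
  case: (boolP (0 <= m + nn%:Z)) => [mn0|mn0].
    apply: (red _ h Hh).
    have [mm Em] : exists mm : nat, m + h.2 = mm%:Z by exists (absz (m + h.2)); lia.
    rewrite /wmul /= Em; apply: base; lia.
  apply: (red _ h Hh).
  apply: IH; rewrite /= Eh; lia.
exists S => [[c m]].
exact: (main (absz m)).
Qed.
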